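(* Let $m<M$ be real numbers and let $X$ be a random variable taking values in $[m,M]$, either discrete (taking finitely many values $x_1,\dots,x_n\in[m,M]$ with probabilities $p_1,\dots,p_n$) or continuous (with probability density $f$ on $[m,M]$). Let $\mu_1'$ be its mean and $\mu_2,\mu_3,\mu_4$ its second, third and fourth central moments, and assume $\mu_2\neq(\mu_1'-m)(M-\mu_1')$ and $\mu_2>0$. Then $$\mu_4-\mu_2^2-\frac{\mu_3^2}{\mu_2}\le (\mu_1'-m)(M-\mu_1')\Big(\frac{M-m}{4}\Big)^2\le\frac{(M-m)^4}{64}.$$
   Context: The mean is $\mu_1'=\sum_{i=1}^n p_i x_i$ (discrete case) or $\mu_1'=\int_m^M x f(x)\,dx$ (continuous case), where $\sum p_i=1$, resp. $\int_m^M f(x)\,dx=1$. The $r$-th central moment is $\mu_r=\sum_{i=1}^n p_i (x_i-\mu_1')^r$, resp. $\mu_r=\int_m^M (x-\mu_1')^r f(x)\,dx$. *)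

(* Defs.v *)
From HB Require Import structures.
From mathcomp Require Import all_boot all_order all_algebra.
From mathcomp Require Import all_classical all_reals all_analysis.
Set Implicit Arguments. Unset Strict Implicit. Unset Printing Implicit Defensive.
Import Order.TTheory GRing.Theory Num.Theory.
Import numFieldNormedType.Exports.
Local Open Scope classical_set_scope.
Local Open Scope ring_scope.

Definition dmean (R : realType) (n : nat) (p x : 'I_n -> R) : R :=
  \sum_(i < n) p i * x i.

Definition dcmoment (R : realType) (n : nat) (p x : 'I_n -> R) (r : nat) : R :=
  \sum_(i < n) p i * (x i - dmean p x) ^+ r.

Definition cmean (R : realType) (m M : R) (f : R -> R) : R :=
  Rintegral (@lebesgue_measure R) `[m, M] (fun x => x * f x).

Definition ccmoment (R : realType) (m M : R) (f : R -> R) (r : nat) : R :=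
  Rintegral (@lebesgue_measure R) `[m, M]
    (fun x => (x - cmean m M f) ^+ r * f x).

Definition is_density_on (R : realType) (m M : R) (f : R -> R) : Prop :=
  [/\ measurable_fun `[m, M] f,
      (forall x, m <= x <= M -> 0 <= f x),
      (@lebesgue_measure R).-integrable `[m, M] (fun x => (f x)%:E) &
      Rintegral (@lebesgue_measure R) `[m, M] f = 1].

Definition cor_concl (R : realType) (m M mu1 mu2 mu3 mu4 : R) : Prop :=
  mu4 - mu2 ^+ 2 - mu3 ^+ 2 / mu2 <= (mu1 - m) * (M - mu1) * ((M - m) / 4) ^+ 2
  /\ (mu1 - m) * (M - mu1) * ((M - m) / 4) ^+ 2 <= (M - m) ^+ 4 / 64.

(* Main.v *)
Require Import Defs.
From HB Require Import structures.
From mathcomp Require Import all_boot all_order all_algebra.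
From mathcomp Require Import all_classical all_reals all_analysis.
From mathcomp Require Import measurable_realfun ring lra.
Set Implicit Arguments. Unset Strict Implicit. Unset Printing Implicit Defensive.
Import Order.TTheory GRing.Theory Num.Theory.
Import numFieldNormedType.Exports.
Local Open Scope classical_set_scope.
Local Open Scope ring_scope.

Definition kS (R : realType) (m M mu m2 m3 m4 : R) : R :=
  let a := mu - m in let b := M - mu in let r := (b - a) / 4 in
  - m4 + (2 * r + b - a) * m3 + (a * b - r ^+ 2 - 2 * r * (b - a)) * m2
  + a * b * r ^+ 2.

Lemma core (R : realType) (m M mu m2 m3 m4 : R) : 0 < m2 ->
  0 <= kS m M mu m2 m3 m4 -> cor_concl m M mu m2 m3 m4.
Proof.
move=> h2 hS; rewrite /cor_concl /kS in hS *.
set a := mu - m in hS *; set b := M - mu in hS *.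
have -> : M - m = a + b by rewrite /a /b; ring.
set c := 3 * (b - a) / 4; set d := a * b / 2.
set Q := m4 - 2 * c * m3 + (c ^+ 2 - 2 * d) * m2 + d ^+ 2.
have e1 : m4 - m2 ^+ 2 - m3 ^+ 2 / m2 =
   Q - ((c * m2 - m3) ^+ 2 / m2 + (d - m2) ^+ 2).
  rewrite /Q; field; exact: lt0r_neq0.
have e2 : a * b * ((a + b) / 4) ^+ 2 - Q =
  - m4 + (2 * ((b - a) / 4) + b - a) * m3 + (a * b - ((b - a) / 4) ^+ 2
  - 2 * ((b - a) / 4) * (b - a)) * m2 + a * b * ((b - a) / 4) ^+ 2.
  by rewrite /Q /c /d; field; lra.
have p1 : 0 <= (c * m2 - m3) ^+ 2 / m2 + (d - m2) ^+ 2 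
  by rewrite addr_ge0 ?divr_ge0 ?sqr_ge0 ?ltW.
split; first by rewrite e1; lra.
have e3 : (a + b) ^+ 4 / 64 - a * b * ((a + b) / 4) ^+ 2 =
  ((a + b) / 4) ^+ 2 * (a - b) ^+ 2 / 4 by field.
have : 0 <= ((a + b) / 4) ^+ 2 * (a - b) ^+ 2 / 4.
  by rewrite divr_ge0 // mulr_ge0 // sqr_ge0.
rewrite -e3 subr_ge0 //.
Qed.

Lemma kpoly (R : realType) (m M mu x : R) :
  let a := mu - m in let b := M - mu in let r := (b - a) / 4 in
  (x - m) * (M - x) * (x - mu - r) ^+ 2 =
  - (x - mu) ^+ 4 + (2 * r + b - a) * (x - mu) ^+ 3
  + (a * b - r ^+ 2 - 2 * r * (b - a)) * (x - mu) ^+ 2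
  + (r ^+ 2 * (b - a) - 2 * r * (a * b)) * (x - mu) + a * b * r ^+ 2 * (x - mu) ^+ 0.
Proof. move=> a b r; rewrite /r /a /b expr0; ring. Qed.

Lemma discrete_case (R : realType) (m M : R) (n : nat) (p x : 'I_n -> R) :
  (forall i, 0 <= p i) -> \sum_(i < n) p i = 1 ->
  (forall i, m <= x i <= M) ->
  0 < dcmoment p x 2 ->
  cor_concl m M (dmean p x) (dcmoment p x 2) (dcmoment p x 3) (dcmoment p x 4).
Proof.
move=> p0 p1 xmM h2; apply: core => //.
set mu := dmean p x.
have D0 : dcmoment p x 0 = 1.
  by rewrite /dcmoment -p1; apply: eq_bigr => i _; rewrite expr0 mulr1.
have D1 : dcmoment p x 1 = 0.
  rewrite /dcmoment -/mu (eq_bigr (fun i => p i * x i - mu * p i)); last first.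
    by move=> i _; rewrite expr1; ring.
  by rewrite sumrB -mulr_sumr p1 mulr1 subrr.
have : 0 <= \sum_(i < n) p i * ((x i - m) * (M - x i) *
             (x i - mu - ((M - mu) - (mu - m)) / 4) ^+ 2).
  apply: sumr_ge0 => i _; apply: mulr_ge0 => //.
  have /andP[h1 h3] := xmM i.
  by rewrite mulr_ge0 ?sqr_ge0 // mulr_ge0 // subr_ge0.
rewrite (eq_bigr (fun i =>
  - (p i * (x i - mu) ^+ 4)
  + (2 * ((M - mu - (mu - m)) / 4) + (M - mu) - (mu - m)) * (p i * (x i - mu) ^+ 3)
  + ((mu - m) * (M - mu) - ((M - mu - (mu - m)) / 4) ^+ 2
     - 2 * ((M - mu - (mu - m)) / 4) * (M - mu - (mu - m))) * (p i * (x i - mu) ^+ 2)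
  + (((M - mu - (mu - m)) / 4) ^+ 2 * (M - mu - (mu - m))
     - 2 * ((M - mu - (mu - m)) / 4) * ((mu - m) * (M - mu))) * (p i * (x i - mu) ^+ 1)
  + (mu - m) * (M - mu) * ((M - mu - (mu - m)) / 4) ^+ 2 * (p i * (x i - mu) ^+ 0))); last first.
  by move=> i _; rewrite (kpoly m M mu (x i)) /=; ring.
rewrite !big_split /= sumrN -!mulr_sumr.
rewrite -[\sum_(i < n) p i * (x i - mu) ^+ 0]/(dcmoment p x 0).
rewrite -[\sum_(i < n) p i * (x i - mu) ^+ 1]/(dcmoment p x 1).
rewrite -[\sum_(i < n) p i * (x i - mu) ^+ 2]/(dcmoment p x 2).
rewrite -[\sum_(i < n) p i * (x i - mu) ^+ 3]/(dcmoment p x 3).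
rewrite -[\sum_(i < n) p i * (x i - mu) ^+ 4]/(dcmoment p x 4).
rewrite D0 D1 /kS -/mu.
move=> h; lra.
Qed.

Section cont.
Context (R : realType).
Local Notation mu := (@lebesgue_measure R).

Lemma boundedP (m M c : R) (j : nat) :
  [bounded (x - c) ^+ j | x in `[m, M]].
Proof.
rewrite /bounded_near; near=> B => x /= Dx.
have /andP[h1 h2] : m <= x <= M by move: Dx; rewrite /= in_itv.
apply: (@le_trans _ _ ((`|m| + `|M| + `|c|) ^+ j)).
  rewrite normrX; apply: lerXn2r; rewrite ?nnegrE ?normr_ge0 ?addr_ge0 //.
  apply: (le_trans (ler_normB _ _)); rewrite lerD2r.
  have : -`|m| <= m by rewrite lerNnormlW.
  have : m <= `|m| by apply: ler_norm.
  have : M <= `|M| by apply: ler_norm.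
  have : -`|M| <= M by rewrite lerNnormlW.
  move=> *; rewrite ler_norml; apply/andP; split; lra.
near: B; apply: nbhs_pinfty_ge; exact: num_real.
Unshelve. all: end_near. Qed.

Lemma intP (m M c : R) (f : R -> R) (j : nat) :
  mu.-integrable `[m, M] (fun x => (f x)%:E) ->
  mu.-integrable `[m, M] (EFin \o (fun x => (x - c) ^+ j * f x)).
Proof.
move=> fi.
have := @integrableMr _ _ _ mu `[m, M] (measurable_itv _) (fun x => (x - c) ^+ j) (EFin \o f).
have -> : ((EFin \o (fun x => ((x - c) ^+ j)%R)) \* (EFin \o f))%E =
  (EFin \o (fun x => (x - c) ^+ j * f x)) by apply: funext => x /=; rewrite EFinM.
apply => //; last exact: boundedP.
apply: measurable_funX; apply: measurable_funB => //; exact: measurable_id.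
Qed.

Lemma intD (m M : R) (g1 g2 : R -> R) :
  mu.-integrable `[m, M] (EFin \o g1) -> mu.-integrable `[m, M] (EFin \o g2) ->
  mu.-integrable `[m, M] (EFin \o (fun x => g1 x + g2 x)).
Proof.
move=> i1 i2; have := @integrableD _ _ _ mu `[m, M] (measurable_itv _) _ _ i1 i2.
have -> : ((EFin \o g1) \+ (EFin \o g2))%E = EFin \o (fun x => g1 x + g2 x)
  by apply: funext => x /=; rewrite EFinD.
by [].
Qed.

Lemma intZ (m M k : R) (g : R -> R) :
  mu.-integrable `[m, M] (EFin \o g) ->
  mu.-integrable `[m, M] (EFin \o (fun x => k * g x)).
Proof.
move=> i1; have := @integrableZl _ _ _ mu `[m, M] (measurable_itv _) k _ i1.
have -> : (fun x => k%:E * (EFin \o g) x)%E = EFin \o (fun x => k * g x)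
  by apply: funext => x /=; rewrite EFinM.
by [].
Qed.

Lemma cont_case (m M : R) (f : R -> R) :
  is_density_on m M f -> 0 < ccmoment m M f 2 ->
  cor_concl m M (cmean m M f) (ccmoment m M f 2) (ccmoment m M f 3)
       (ccmoment m M f 4).
Proof.
case=> mf f0 fi f1 h2; apply: core => //.
set c := cmean m M f.
pose F j x := (x - c) ^+ j * f x.
have iF j : mu.-integrable `[m, M] (EFin \o F j) := @intP m M c f j fi.
have I0 : \int[mu]_(x in `[m, M]) F 0 x = 1.
  by rewrite -f1; apply: eq_Rintegral => x _; rewrite /F expr0 mul1r.
have ix : mu.-integrable `[m, M] (EFin \o (fun x => x * f x)).
  have -> : (fun x => x * f x) = (fun x => (x - 0) ^+ 1 * f x).
    by apply: funext => x; rewrite subr0 expr1.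
  exact: intP.
have I1 : \int[mu]_(x in `[m, M]) F 1 x = 0.
  have -> : \int[mu]_(x in `[m, M]) F 1 x =
     \int[mu]_(x in `[m, M]) (x * f x + (- c) * f x).
    by apply: eq_Rintegral => x _; rewrite /F expr1; ring.
  rewrite RintegralD //; last exact: intZ.
  rewrite RintegralZl // f1 mulr1.
  by rewrite -/(cmean m M f) -/c subrr.
set r := ((M - c) - (c - m)) / 4.
have Hk : 0 <= \int[mu]_(x in `[m, M]) ((x - m) * (M - x) * (x - c - r) ^+ 2 * f x).
  apply: Rintegral_ge0 => x Dx.
  have /andP[h1 h3] : m <= x <= M by move: Dx; rewrite /= in_itv.
  by rewrite mulr_ge0 ?f0 ?h1 ?h3 // mulr_ge0 ?sqr_ge0 // mulr_ge0 // subr_ge0.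
move: Hk.
have -> : \int[mu]_(x in `[m, M]) ((x - m) * (M - x) * (x - c - r) ^+ 2 * f x) =
 \int[mu]_(x in `[m, M]) (
  (-1) * F 4 x
  + (2 * r + (M - c) - (c - m)) * F 3 x
  + ((c - m) * (M - c) - r ^+ 2 - 2 * r * (M - c - (c - m))) * F 2 x
  + (r ^+ 2 * (M - c - (c - m)) - 2 * r * ((c - m) * (M - c))) * F 1 x
  + (c - m) * (M - c) * r ^+ 2 * F 0 x).
  by apply: eq_Rintegral => x _; rewrite (kpoly m M c x) /F /r /=; ring.
rewrite !RintegralD //; try by repeat (apply: intD || apply: intZ || apply: iF).
rewrite !RintegralZl // I1 mul1r f1.
have -> : \int[mu]_(x in `[m, M]) F 2 x = ccmoment m M f 2 by [].
have -> : \int[mu]_(x in `[m, M]) F 3 x = ccmoment m M f 3 by [].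
have -> : \int[mu]_(x in `[m, M]) F 4 x = ccmoment m M f 4 by [].
rewrite /kS -/c -/r => h; lra.
Qed.

End cont.

Theorem corollary2p4 (R : realType) (m M : R) (hmM : m < M) :
  (* discrete case *)
  (forall (n : nat) (p x : 'I_n -> R),
     (forall i, 0 <= p i) -> \sum_(i < n) p i = 1 ->
     (forall i, m <= x i <= M) ->
     dcmoment p x 2 != (dmean p x - m) * (M - dmean p x) ->
     0 < dcmoment p x 2 ->
     cor_concl m M (dmean p x) (dcmoment p x 2) (dcmoment p x 3) (dcmoment p x 4))
  /\
  (* continuous case *)
  (forall f : R -> R,
     is_density_on m M f ->
     ccmoment m M f 2 != (cmean m M f - m) * (M - cmean m M f) ->
     0 < ccmoment m M f 2 ->
     cor_concl m M (cmean m M f) (ccmoment m M f 2) (ccmoment m M f 3)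
       (ccmoment m M f 4)).
Proof.
split.
  by move=> n p x p0 p1 xmM _ h2; apply: discrete_case.
by move=> f hf _ h2; apply: cont_case.
Qed.
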